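(* Let $P$ be a set partition of $[n]$ with $3\le |P|\le n-1$, and let $Q\le P$ be a set partition with $|Q|\ge 3$. Then there is a set partition $Q'$ with $Q'\preceq P$ and $Q\le Q'$, and moreover $Z_Q(H)\subset Z_{Q'}(H)$ for every $H\in S(n)$.
   Context: $[n]=\{1,\dots,n\}$. A stable $n$-labeled tree is a finite tree with exactly $n$ leaves labeled bijectively by $[n]$, all of whose internal vertices have degree $\ge 3$; $V(G)$ is the set of internal vertices, $S(n)$ the set of such trees up to label-preserving isomorphism, $S_k(n)$ those with exactly $k$ internal vertices. $G\rightsquigarrow G'$ means $G'$ is obtained from $G$ by collapsing connected sets of internal vertices to single vertices, inducing a surjection $V(G)\to V(G')$; write $w\rightsquigarrow v$ if $w$ maps to $v$. Set partitions: for set partitions $P,Q$ of $[n]$, $P\le Q$ means $Q$ refines $P$ (every block of $Q$ is contained in a block of $P$). $P\preceq Q$ means $P\le Q$ and no block $B\in P$ with $|B|\ge 2$ is contained in the union of the singleton blocks of $Q$. Basic pairs: for a set partition $P$ with $3\le |P|\le n-1$, the basic pair $(G_P,v_P)$ is the tree in $S(n)$ with a central internal vertex $v_P$ such that for each block $B\in P$ with $|B|=1$ the leaf labeled by it is adjacent to $v_P$, and for each block $B$ with $|B|\ge2$ there is an internal vertex adjacent to $v_P$ and to the leaves labeled by $B$ (and to nothing else). For such $P$ define the assignment $Z_P$ by $Z_P(H)=\{w\in V(H): \text{there is a contraction } H\rightsquigarrow G_P \text{ with } w\rightsquigarrow v_P\}$. *)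

(* Defs.v *)
From mathcomp Require Import all_boot.
Set Implicit Arguments. Unset Strict Implicit. Unset Printing Implicit Defensive.

(** Set partitions of [n] = 'I_n (labels 0..n-1 stand for 1..n). *)
Definition setpart (n : nat) (P : {set {set 'I_n}}) : Prop :=
  partition P [set: 'I_n].

(** [ple P Q] is P <= Q : Q refines P (every block of Q lies in a block of P). *)
Definition ple (n : nat) (P Q : {set {set 'I_n}}) : Prop :=
  forall B, B \in Q -> exists2 C, C \in P & B \subset C.

Definition singles (n : nat) (Q : {set {set 'I_n}}) : {set 'I_n} :=
  \bigcup_(B in Q | #|B| == 1) B.

Definition pprec (n : nat) (P Q : {set {set 'I_n}}) : Prop :=
  ple P Q /\ (forall B, B \in P -> 2 <= #|B| -> ~~ (B \subset singles Q)).

(** An n-labeled tree, given by its internal vertices 'I_nv, the adjacency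
    relation between internal vertices, and for each leaf label i the
    internal vertex the leaf i is attached to. *)
Record ltree (n : nat) := LTree {
  nv : nat;
  adj : rel 'I_nv;
  lf : 'I_n -> 'I_nv }.
Arguments nv {n} l.
Arguments adj {n} l _ _.
Arguments lf {n} l _.

(** Stability: the graph (internal vertices + leaves) is a tree and every
    internal vertex has degree >= 3.  Leaves have degree 1, so being a tree
    amounts to the internal graph being a tree (connected, no simple cycle). *)
Definition stable (n : nat) (T : ltree n) : Prop :=
  [/\ symmetric (adj T), irreflexive (adj T),
      (forall u v, connect (adj T) u v),
      ~ (exists c : seq 'I_(nv T), [/\ 3 <= size c, uniq c & cycle (adj T) c]) &
      (forall v, 3 <= #|[set u | adj T v u]| + #|[set i | lf T i == v]|)].

(** f : V(H) -> V(G) is a contraction H ~> G: G is (isomorphic, via f, to)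
    the tree obtained from H by collapsing the connected fibres of f. *)
Definition contraction (n : nat) (H G : ltree n) (f : 'I_(nv H) -> 'I_(nv G)) : Prop :=
  [/\ (forall u', exists u, f u = u'),
      (forall u1 u2, f u1 = f u2 ->
         connect [rel x y | [&& adj H x y, f x == f u1 & f y == f u1]] u1 u2),
      (forall i, lf G i = f (lf H i)) &
      (forall u' v', adj G u' v' <->
         (u' <> v' /\ exists u v, [/\ adj H u v, f u = u' & f v = v']))].

Definition basic_pair (n : nat) (P : {set {set 'I_n}}) (G : ltree n) (v : 'I_(nv G)) : Prop :=
  [/\ stable G,
      (forall B, B \in P -> #|B| = 1 -> forall i, i \in B -> lf G i = v),
      (forall B, B \in P -> 2 <= #|B| ->
         exists u, [/\ adj G v u,
                       (forall i, (lf G i == u) = (i \in B)) &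
                       (forall x, adj G u x -> x = v)]) &
      (forall u, u = v \/ exists i, u = lf G i)].

Arguments contraction {n} H G f.
Arguments basic_pair {n} P G v.

Definition inZ (n : nat) (P : {set {set 'I_n}}) (H : ltree n) (w : 'I_(nv H)) : Prop :=
  exists (G : ltree n) (v : 'I_(nv G)) (f : 'I_(nv H) -> 'I_(nv G)),
    [/\ basic_pair P G v, contraction H G f & f w = v].
Arguments inZ {n} P H w.

(* Main.v *)
Require Import Defs.
From mathcomp Require Import all_boot.
Set Implicit Arguments. Unset Strict Implicit. Unset Printing Implicit Defensive.
From mathcomp Require Import zify.

Lemma same_block (T : finType) (Q : {set {set T}}) D B1 B2 x :
  partition Q D -> B1 \in Q -> B2 \in Q -> x \in B1 -> x \in B2 -> B1 = B2.
Proof.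
case/and3P=> _ /trivIsetP tQ _ h1 h2 x1 x2.
apply/eqP; apply/negPn/negP=> ne.
by have := disjointFr (tQ _ _ h1 h2 ne) x1; rewrite x2.
Qed.

Lemma contraction_comp n (H G K : ltree n) f g :
  contraction H G f -> contraction G K g -> contraction H K (fun x => g (f x)).
Proof.
case=> fs ff fl fa [gs gf gl ga]; split.
- move=> u''; have [u' <-] := gs u''; have [u <-] := fs u'; by exists u.
- move=> u1 u2 e.
  set c := g (f u1).
  set RH := [rel x y | [&& adj H x y, g (f x) == c & g (f y) == c]].
  have lift : forall a b, f a = f b -> g (f a) = c -> connect RH a b.
    move=> a b eab ga_c; apply: connect_sub (ff a b eab) => x y /= /and3P[axy /eqP fx /eqP fy].
    by apply: connect1; rewrite /= axy fx fy ga_c !eqxx.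
  have := gf _ _ e; case/connectP=> p pth lst.
  suff: forall p x, g x = c -> path [rel x y | [&& adj G x y, g x == g (f u1) & g y == g (f u1)]] x p ->
     f u2 = last x p -> forall a, f a = x -> connect RH a u2.
    by move/(_ p (f u1) erefl pth lst u1 erefl).
  elim=> [|y q IH] /= x gx.
    move=> _ lst' a fa'; apply: lift.
    - by rewrite fa' lst'.
    - by rewrite fa' gx.
  case/andP=> /and3P[axy _ /eqP gy] pth' lst' a fa'.
  have [_ [a' [b' [ab fa1 fb1]]]] := (fa x y).1 axy.
  apply: connect_trans (lift a a' _ _) _; first by rewrite fa1.
    by rewrite fa' gx.
  apply: connect_trans (connect1 _) (IH y gy pth' lst' b' fb1).
  by rewrite /= ab fa1 fb1 gx gy !eqxx.
- by move=> i; rewrite gl fl.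
- move=> u'' v''; split.
  + case/ga=> ne [x [y [axy gx gy]]]; split=> //.
    have [_ [a [b [ab fa1 fb1]]]] := (fa x y).1 axy.
    by exists a, b; rewrite fa1 fb1.
  + case=> ne [a [b [ab ga1 gb1]]]; apply/ga; split=> //.
    exists (f a), (f b); split=> //; apply/fa; split.
      by move=> e; apply: ne; rewrite -ga1 -gb1 e.
    by exists a, b.
Qed.

Definition splitb n (P : {set {set 'I_n}}) (B : {set 'I_n}) :=
  (2 <= #|B|) && (B \subset singles P).
Definition Qp n (P Q : {set {set 'I_n}}) : {set {set 'I_n}} :=
  [set B in Q | ~~ splitb P B] :|: [set [set i] | i in \bigcup_(B in Q | splitb P B) B].

Section QpSec.
Variables (n : nat) (P Q : {set {set 'I_n}}).
Hypotheses (hP : setpart P) (hQ : setpart Q) (hQP : ple Q P).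

Lemma Qp_mem B : B \in Qp P Q ->
  (B \in Q /\ ~~ splitb P B) \/
  exists2 B0, B0 \in Q & splitb P B0 /\ exists2 j, j \in B0 & B = [set j].
Proof.
rewrite /Qp in_setU inE => /orP[/andP[h1 h2]|]; first by left.
case/imsetP=> j /bigcupP[B0 /andP[h0 s0] jB0] ->; right; exists B0 => //.
by split=> //; exists j.
Qed.

Lemma Qp_inQ B : B \in Q -> ~~ splitb P B -> B \in Qp P Q.
Proof. by move=> h1 h2; rewrite /Qp in_setU inE h1 h2. Qed.

Lemma Qp_in1 B0 j : B0 \in Q -> splitb P B0 -> j \in B0 -> [set j] \in Qp P Q.
Proof.
move=> h1 h2 h3; rewrite /Qp in_setU; apply/orP; right.
by apply/imsetP; exists j => //; apply/bigcupP; exists B0 => //; rewrite h1.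
Qed.

Lemma coverQ (i : 'I_n) : exists2 B, B \in Q & i \in B.
Proof.
have : i \in cover Q by move/and3P: hQ => [/eqP -> _ _]; rewrite in_setT.
by case/bigcupP=> B hB iB; exists B.
Qed.

Lemma Qp_part : setpart (Qp P Q).
Proof.
apply/and3P; split.
- apply/eqP/setP=> i; rewrite in_setT; apply/bigcupP.
  have [B hB iB] := coverQ i.
  case sB: (splitb P B).
    by exists [set i]; [apply: (Qp_in1 hB sB iB) | rewrite in_set1].
  by exists B => //; apply: Qp_inQ; rewrite ?sB.
- apply/trivIsetP=> B1 B2 h1 h2 ne.
  apply/pred0P=> x /=; apply/negP=> /andP[x1 x2]; move/negP: ne; apply; apply/eqP.
  case: (Qp_mem h1) => [[q1 s1]|[C1 c1 [sc1 [j1 j1C e1]]]]; try subst B1;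
  case: (Qp_mem h2) => [[q2 s2]|[C2 c2 [sc2 [j2 j2C e2]]]]; try subst B2.
  + exact: same_block hQ q1 q2 x1 x2.
  + move: x2; rewrite in_set1 => /eqP ex; subst x.
    by have e := same_block hQ q1 c2 x1 j2C; rewrite e sc2 in s1.
  + move: x1; rewrite in_set1 => /eqP ex; subst x.
    by have e := same_block hQ q2 c1 x2 j1C; rewrite e sc1 in s2.
  + by move: x1 x2; rewrite !in_set1 => /eqP <- /eqP <-.
- apply/negP=> h; case: (Qp_mem h) => [[q _]|[C _ [_ [j _ e]]]].
    by move/and3P: hQ => [_ _ /negP]; apply.
  by have := set11 j; rewrite -e inE.
Qed.

Lemma Qp_ple : ple Q (Qp P Q).
Proof.
move=> B h; case: (Qp_mem h) => [[q _]|[C c [_ [j jC ->]]]].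
  by exists B.
by exists C => //; rewrite sub1set.
Qed.

Lemma Qp_pprec : pprec (Qp P Q) P.
Proof.
split.
- move=> C hC; have [B hB CB] := hQP hC.
  case sB: (splitb P B); last by exists B => //; apply: Qp_inQ; rewrite ?sB.
  have CS : C \subset singles P by apply: subset_trans CB _; case/andP: sB.
  have [x xC] : exists x, x \in C.
    apply/set0Pn; apply/negP=> /eqP C0; move/and3P: hP => [_ _ /negP]; apply.
    by rewrite -C0.
  have := subsetP CS x xC; case/bigcupP=> D /andP[hD /eqP D1] xD.
  have eCD := same_block hP hC hD xC xD.
  have [y Dy] := cards1P (introT eqP D1).
  have ex : x = y by move: xD; rewrite Dy in_set1 => /eqP.
  exists [set x]; last by rewrite eCD Dy ex.
  by apply: (Qp_in1 hB sB); apply: (subsetP CB).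
- move=> B h c2; case: (Qp_mem h) => [[q s]|[C _ [_ [j _ e]]]].
    by move: s; rewrite /splitb c2.
  by move: c2; rewrite e cards1.
Qed.

End QpSec.

Section GSec.
Variables (n : nat) (P Q : {set {set 'I_n}}).
Hypotheses (hQ : setpart Q).
Variables (G : ltree n) (v : 'I_(nv G)).
Hypothesis hb : basic_pair Q G v.

Definition abs (x : 'I_(nv G)) := (x != v) && [forall i, (lf G i == x) ==> (i \in singles P)].
Definition K : {set 'I_(nv G)} := [set x | ~~ abs x].
Lemma vK : v \in K. Proof. by rewrite inE /abs eqxx. Qed.
Definition gm x := if abs x then v else x.
Definition h x : 'I_#|K| := enum_rank_in vK (gm x).
Definition G' : ltree n :=
  @LTree n #|K| (fun a b => adj G (enum_val a) (enum_val b)) (fun i => h (lf G i)).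

Lemma gmK x : gm x \in K.
Proof. by rewrite /gm; case: ifP => a; [exact: vK | rewrite inE a]. Qed.
Lemma evh x : enum_val (h x) = gm x.
Proof. exact: (enum_rankK_in vK (gmK x)). Qed.
Lemma gm_nabs x : ~~ abs x -> gm x = x.
Proof. by rewrite /gm => /negbTE ->. Qed.
Lemma gmv : gm v = v.
Proof. by rewrite /gm; case: ifP. Qed.
Lemma hev a : h (enum_val a) = a.
Proof.
have : enum_val a \in K by exact: enum_valP.
rewrite inE => na; rewrite /h gm_nabs //; exact: enum_valK_in.
Qed.
Lemma heq x y : (h x = h y) <-> (gm x = gm y).
Proof.
split; last by rewrite /h => ->.
by move=> e; rewrite -evh e evh.
Qed.
Lemma gm_cases x : gm x = v \/ (gm x = x /\ ~~ abs x).
Proof. by rewrite /gm; case: ifP => a; [left | right]. Qed.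

Lemma Gsym : symmetric (adj G). Proof. by case: hb => -[]. Qed.
Lemma Girr : irreflexive (adj G). Proof. by case: hb => -[]. Qed.

Lemma nonv x : x != v -> exists B, [/\ B \in Q, 2 <= #|B|, adj G v x,
   (forall i, (lf G i == x) = (i \in B)) & (forall y, adj G x y -> y = v)].
Proof.
case: hb => _ hsing hnon hall xv.
have [ex|[i ei]] := hall x; first by rewrite ex eqxx in xv.
have [B hB iB] := coverQ hQ i.
have c1 : 0 < #|B| by apply/card_gt0P; exists i.
have c2 : 2 <= #|B|.
  case: (ltngtP #|B| 1) => // [|c].
    by rewrite ltnS leqn0 => /eqP c0; rewrite c0 in c1.
  by rewrite ei (hsing B hB c i iB) eqxx in xv.
have [u [a1 a2 a3]] := hnon B hB c2.
have eu : u = x by rewrite ei; apply/eqP; rewrite eq_sym a2.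
subst u; exists B; split=> //.
Qed.

Lemma adjv x y : adj G x y -> x = v \/ y = v.
Proof.
move=> a; case: (eqVneq x v) => [e|ne]; first by left.
by right; have [B [_ _ _ _ hy]] := nonv ne; exact: hy.
Qed.

Lemma abs_adj x : abs x -> adj G v x.
Proof. by case/andP=> ne _; have [B [_ _ ?  _ _]] := nonv ne. Qed.

Lemma abs_ne x : abs x -> x != v.
Proof. by case/andP. Qed.

Lemma contr_G : contraction G G' h.
Proof.
split.
- by move=> a; exists (enum_val a); exact: hev.
- move=> u1 u2 /heq e.
  set R := [rel x y | [&& adj G x y, h x == h u1 & h y == h u1]].
  have tov : forall x, gm x = v -> gm u1 = v -> connect R x v /\ connect R v x.
    move=> x gx g1.
    have hx : h x = h u1 by apply/heq; rewrite gx g1.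
    have hv : h v = h u1 by apply/heq; rewrite gmv g1.
    case: (eqVneq x v) => [->|ne]; first by split; exact: connect0.
    have ax : abs x by move: gx; rewrite /gm; case: ifP => // _ ex; rewrite ex eqxx in ne.
    have a1 := abs_adj ax.
    split; apply: connect1; rewrite /= ?hx ?hv !eqxx ?a1 //.
    by rewrite Gsym a1.
  case: (gm_cases u1) => [g1|[g1 n1]].
    have [c1 _] := tov u1 g1 g1.
    have g2 : gm u2 = v by rewrite -e.
    have [_ c2] := tov u2 g2 g1.
    exact: connect_trans c1 c2.
  case: (gm_cases u2) => [g2|[g2 n2]].
    have g1' : gm u1 = v by rewrite e.
    have [c1 _] := tov u1 g1' g1'.
    have [_ c2] := tov u2 g2 g1'.
    exact: connect_trans c1 c2.
  by rewrite -g1 -g2 e; exact: connect0.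
- by [].
- move=> a b; split.
  + move=> /= ab; split.
      by move=> e; rewrite e Girr in ab.
    by exists (enum_val a), (enum_val b); rewrite !hev.
  + case=> ne [x [y [axy hx hy]]]; rewrite /= -hx -hy !evh.
    have ng : gm x <> gm y by move=> e; apply: ne; rewrite -hx -hy; apply/heq.
    case: (adjv axy) => ev; subst.
    * case: (gm_cases y) => [g|[g _]]; first by rewrite g gmv in ng.
      by rewrite g gmv.
    * case: (gm_cases x) => [g|[g _]]; first by rewrite g gmv in ng.
      by rewrite g gmv.
Qed.

Lemma hv_ev a : enum_val a = v -> a = h v.
Proof. by move=> e; rewrite -(hev a) e. Qed.

Lemma adj_hv a : a != h v -> adj G' a (h v).
Proof.
move=> ne; rewrite /= evh gmv.
have nv : enum_val a != v by apply/negP=> /eqP /hv_ev e; rewrite e eqxx in ne.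
by have [B [_ _ av _ _]] := nonv nv; rewrite Gsym.
Qed.

Lemma adjG'v a b : adj G' a b -> a = h v \/ b = h v.
Proof. by move=> /= /adjv [e|e]; [left|right]; apply: hv_ev. Qed.

Lemma stable_G' : stable G'.
Proof.
case: hb => -[_ _ _ _ hdeg] hsing hnon hall.
split.
- by move=> a b; rewrite /= Gsym.
- by move=> a; rewrite /= Girr.
- have c1 : forall a, connect (adj G') a (h v).
    move=> a; case: (eqVneq a (h v)) => [->|ne]; first exact: connect0.
    by apply: connect1; apply: adj_hv.
  have c2 : forall a, connect (adj G') (h v) a.
    move=> a; case: (eqVneq a (h v)) => [->|ne]; first exact: connect0.
    by apply: connect1; rewrite /= Gsym; apply: adj_hv.
  by move=> a b; apply: connect_trans (c1 a) (c2 b).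
- case=> c [hc uc cy].
  case: c hc uc cy => [|c0 [|c1 [|c2 rest]]] //= _.
  rewrite -/(path _ _ _) !inE => /and4P[] /norP[n01 /norP[n02 n0r]] /norP[n12 n1r] _ _.
  case/and3P=> e01 e12 pth.
  have := pth; rewrite rcons_path => /andP[_ ez].
  have zin := mem_last c2 rest.
  case: (adjG'v e12) => e1.
  + subst c1; case: (adjG'v ez) => ez'.
      by move: zin; rewrite ez' inE (negbTE n12) (negbTE n1r).
    by rewrite ez' eqxx in n01.
  + subst c2; case: (adjG'v e01) => e0; first by rewrite e0 eqxx in n02.
    by rewrite e0 eqxx in n12.
- move=> a; case: (eqVneq a (h v)) => [->|ne].
  + set N := [set y | adj G v y]; set Lv := [set i | lf G i == v].
    set A := [set y | abs y]; set LA := [set i | abs (lf G i)].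
    have d0 : 3 <= #|N| + #|Lv| := hdeg v.
    have d1 : #|N :\: A| <= #|[set u | adj G' (h v) u]|.
      have inj : {in N :\: A &, injective h}.
        move=> x y; rewrite !inE => /andP[nx _] /andP[ny _] /heq.
        by rewrite !gm_nabs.
      have -> : #|N :\: A| = #|h @: (N :\: A)| by rewrite card_in_imset.
      apply: subset_leq_card.
      apply/subsetP=> z /imsetP[y]; rewrite !inE => /andP[ay ny] ->.
      by rewrite /= !evh gmv gm_nabs.
    have d2 : #|Lv| + #|LA| <= #|[set i | lf G' i == h v]|.
      rewrite -cardsUI.
      have -> : Lv :&: LA = set0.
        apply/setP=> i; rewrite !inE; apply/negP=> /andP[/eqP e a'].
        by move: (abs_ne a'); rewrite e eqxx.
      rewrite cards0 addn0; apply: subset_leq_card; apply/subsetP=> i.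
      rewrite !inE /= => /orP[/eqP e|a']; apply/eqP/heq; rewrite gmv ?e ?gmv //.
      by rewrite /gm a'.
    have d3 : #|A| <= #|LA|.
      apply: leq_trans (leq_imset_card (lf G) LA); apply: subset_leq_card.
      apply/subsetP=> y; rewrite inE => ay.
      have [ev|[i ei]] := hall y; first by move: (abs_ne ay); rewrite ev eqxx.
      by apply/imsetP; exists i; rewrite // inE -ei.
    have d4 : #|N| <= #|N :\: A| + #|A|.
      rewrite -(cardsID A N) addnC leq_add2l; apply: subset_leq_card; exact: subsetIr.
    lia.
  + have nv : enum_val a != v by apply/negP=> /eqP /hv_ev e; rewrite e eqxx in ne.
    have [B [hB c2 av hl _]] := nonv nv.
    have na : ~~ abs (enum_val a) by have := enum_valP a; rewrite inE.
    have l1 : 1 <= #|[set u | adj G' a u]|.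
      by apply/card_gt0P; exists (h v); rewrite inE adj_hv.
    have l2 : #|B| <= #|[set i | lf G' i == a]|.
      apply: subset_leq_card; apply/subsetP=> i; rewrite -hl inE /= => /eqP ->.
      by rewrite hev.
    lia.
Qed.

Lemma basic_G' : basic_pair (Qp P Q) G' (h v).
Proof.
have st := stable_G'.
case: hb => _ hsing hnon hall.
split=> //.
- move=> B hB c1 i iB; rewrite /=; apply/heq; rewrite gmv.
  case: (Qp_mem hB) => [[q s]|[C0 c0 [sc [j jC e]]]].
    by rewrite (hsing B q c1 i iB) gmv.
  subst B; move: iB; rewrite in_set1 => /eqP ->.
  case: (eqVneq (lf G j) v) => [->|ne]; first exact: gmv.
  have [B1 [h1 _ _ hl _]] := nonv ne.
  have jB1 : j \in B1 by rewrite -hl.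
  have eC := same_block hQ c0 h1 jC jB1; subst B1.
  have ab : abs (lf G j).
    rewrite /abs ne /=; apply/forallP=> i'; apply/implyP; rewrite hl => iC.
    by case/andP: sc => _ /subsetP; apply.
  by rewrite /gm ab.
- move=> B hB c2.
  case: (Qp_mem hB) => [[q s]|[C0 c0 [sc [j jC e]]]]; last by rewrite e cards1 in c2.
  have [u [a1 a2 a3]] := hnon B q c2.
  have uv : u != v by apply/negP=> /eqP e; rewrite e Girr in a1.
  have nu : ~~ abs u.
    apply/negP=> /andP[_ /forallP fa]; move/negP: s; apply; rewrite /splitb c2 /=.
    by apply/subsetP=> i; rewrite -a2 => li; have := fa i; rewrite li.
  exists (h u); split.
  + by rewrite /= !evh gmv gm_nabs.
  + move=> i; rewrite -a2 /=; apply/eqP/eqP => [/heq|->//].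
    rewrite (gm_nabs nu); case: (gm_cases (lf G i)) => [->|[-> _]] //.
    by move=> e; rewrite e eqxx in uv.
  + move=> x; rewrite /= evh (gm_nabs nu) => /a3; exact: hv_ev.
- move=> a; have [e|[i ei]] := hall (enum_val a).
    by left; apply: hv_ev.
  by right; exists i; rewrite /= -ei hev.
Qed.

End GSec.

Theorem lemma6p3 (n : nat) (P Q : {set {set 'I_n}}) :
  setpart P -> 3 <= #|P| <= n - 1 ->
  setpart Q -> ple Q P -> 3 <= #|Q| ->
  exists Q' : {set {set 'I_n}},
    [/\ setpart Q', pprec Q' P, ple Q Q' &
        forall (H : ltree n), stable H ->
          forall w : 'I_(nv H), inZ Q H w -> inZ Q' H w].
Proof.
move=> hP _ hQ hQP _.
exists (Qp P Q); split.
- exact: Qp_part.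
- exact: Qp_pprec.
- exact: Qp_ple.
- move=> H _ w [G [v [f [hb hc fw]]]].
  exists (G' P v), (h P v v), (fun x => h P v (f x)); split.
  + exact: basic_G'.
  + exact: (contraction_comp hc (contr_G P hQ hb)).
  + by rewrite fw.
Qed.
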